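(* Let $C \subseteq \mathbb{F}_q^n$ be a linear code of dimension $k$ with minimum distance $d$, and let $(d_1,\dots,d_k)$ be its weight hierarchy. Assume that there is an integer $i$ with $1 \leqslant i < k$ such that \[ d_k = \frac{q^k-1}{q^{k-i}(q^i-1)}\, d_i. \] Then $C$ is a constant weight code, and the common weight of its non-zero codewords is $d_k\dfrac{q^{k-1}(q-1)}{q^k-1}$.
   Context: For a subcode $D \subseteq C$ (a linear subspace), $\mathrm{Supp}(D)=\{x\in\{1,\dots,n\} : \exists d\in D,\ d_x\neq 0\}$ and $w(D)=\#\mathrm{Supp}(D)$; the weight of a codeword $c$ is the weight of the subcode it spans. For $1\leqslant r\leqslant k$, the $r$-th generalized Hamming weight is $d_r=\min\{w(D) : D \subseteq C \text{ a subcode of dimension } r\}$; the weight hierarchy is $(d_1,\dots,d_k)$, and $d_1=d$. A constant weight code is a code all of whose non-zero codewords have the same weight. *)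

(* Defs.v *)
From HB Require Import structures.
From mathcomp Require Import all_boot all_order all_algebra.
Set Implicit Arguments. Unset Strict Implicit. Unset Printing Implicit Defensive.
Import GRing.Theory.
Local Open Scope ring_scope.

Definition Supp (F : finFieldType) (n : nat) (D : {vspace 'rV[F]_n}) : {set 'I_n} :=
  [set x : 'I_n | [exists v : 'rV[F]_n, (v \in D) && (v ord0 x != 0)]].

Definition wD (F : finFieldType) (n : nat) (D : {vspace 'rV[F]_n}) : nat :=
  #|Supp D|.

Definition wt (F : finFieldType) (n : nat) (c : 'rV[F]_n) : nat := wD <[c]>%VS.

(* is_ghw C r m  <->  m is the r-th generalized Hamming weight d_r of C,
   i.e. m = min { w(D) : D subcode of C of dimension r } *)
Definition is_ghw (F : finFieldType) (n : nat) (C : {vspace 'rV[F]_n}) (r m : nat) : Prop :=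
  (exists2 D : {vspace 'rV[F]_n}, (D <= C)%VS /\ \dim D = r & wD D = m) /\
  (forall D : {vspace 'rV[F]_n}, (D <= C)%VS -> \dim D = r -> (m <= wD D)%N).

Definition constant_weight (F : finFieldType) (n : nat) (C : {vspace 'rV[F]_n}) : Prop :=
  forall c1 c2 : 'rV[F]_n, c1 \in C -> c2 \in C -> c1 != 0 -> c2 != 0 -> wt c1 = wt c2.

(* Main.v *)
Require Import Defs.
From HB Require Import structures.
From mathcomp Require Import all_boot all_order all_algebra all_field.
From mathcomp Require Import zify ring lra.
Import Num.Theory Order.TTheory.
Set Implicit Arguments. Unset Strict Implicit. Unset Printing Implicit Defensive.
Import GRing.Theory.
Local Open Scope ring_scope.

Lemma wtE (F : finFieldType) (n : nat) (c : 'rV[F]_n) :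
  wt c = #|[set x : 'I_n | c ord0 x != 0]|.
Proof.
rewrite /wt /wD /Supp; apply: eq_card => x; rewrite !inE.
apply/existsP/idP => [[v /andP[/vlineP[k ->]]]|cx].
  by rewrite mxE mulf_eq0 negb_or => /andP[].
by exists c; rewrite memv_line.
Qed.

Lemma cardV (F : finFieldType) (n : nat) (V : {vspace 'rV[F]_n}) :
  #|V| = (#|F| ^ \dim V)%N.
Proof. exact: card_vspace. Qed.

Lemma fiber (F : finFieldType) (n : nat) (D : {vspace 'rV[F]_n}) (x : 'I_n) v :
  v \in D -> v ord0 x != 0 ->
  (#|F| * #|[pred c : 'rV[F]_n | (c \in D) && (c ord0 x == 0%R)]| = #|D|)%N.
Proof.
move=> vD vx.
rewrite -[in RHS]sum1_card (partition_big (fun c : 'rV[F]_n => c ord0 x) predT) //=.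
rewrite -sum_nat_const; apply: eq_bigr => a _.
rewrite -sum1_card.
rewrite (reindex_inj (addrI ((- (a / v ord0 x)) *: v))) /=.
apply: eq_bigl => c; rewrite !inE.
rewrite rpredDl ?memvZ //; congr andb.
rewrite !mxE mulNr divfK // addrC subr_eq0.
done.
Qed.


Definition SS (F : finFieldType) (n : nat) (E : {vspace 'rV[F]_n}) : nat :=
  (\sum_(c in E) wt c)%N.

Lemma S_formula (F : finFieldType) (n : nat) (E : {vspace 'rV[F]_n}) :
  (#|F| * SS E = (#|F| - 1) * #|E| * wD E)%N.
Proof.
rewrite /SS /wD.
under eq_bigr do rewrite wtE -sum1_card big_mkcond /=.
rewrite exchange_big /= big_distrr /=.
rewrite -[#|Supp E|]sum1_card big_distrr /= [RHS]big_mkcond /=.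
apply: eq_bigr => x _.
under eq_bigr do rewrite inE.
rewrite -big_mkcondr /= inE.
case: ifP => [/existsP[v /andP[vE vx]]|].
  have := fiber vE vx.
  have -> : #|[pred c : 'rV[F]_n | (c \in E) && (c ord0 x == 0%R)]| =
     (\sum_(c in E | c ord0 x == 0%R) 1)%N.
    by rewrite -sum1_card; apply: eq_bigl => c; rewrite !inE.
  have -> : #|E| = (\sum_(c in E | c ord0 x == 0%R) 1 + \sum_(c in E | c ord0 x != 0%R) 1)%N.
    by rewrite -sum1_card (bigID (fun c : 'rV[F]_n => c ord0 x == 0%R)).
  set q := #|F|.
  have q1 : (1 <= q)%N by rewrite /q; apply/card_gt0P; exists 0.
  move: (\sum_(c in E | c ord0 x == 0%R) 1)%N (\sum_(c in E | c ord0 x != 0%R) 1)%N => a b h.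
  rewrite muln1 mulnBl mul1n mulnDr -h; nia.
move/negbT/existsPn => h0.
rewrite big_pred0 ?muln0 // => c.
exact: (negbTE (h0 c)).
Qed.
Lemma swapv (F : finFieldType) (n : nat) (E : {vspace 'rV[F]_n}) u w :
  u \notin E -> u \in (E + <[w]>)%VS -> w \in (E + <[u]>)%VS.
Proof.
move=> uE /memv_addP[e eE [z /vlineP[a za] ue]]; subst z.
have a0 : a != 0.
  by apply: contraNneq uE => a0; rewrite ue a0 scale0r addr0.
have -> : w = a^-1 *: (u - e) by rewrite ue addrC addKr scalerA mulVf ?scale1r.
apply: memvZ; apply: memvB.
  by apply: (subvP (addvSr E _)); apply: memv_line.
by apply: (subvP (addvSl E _)).
Qed.

Lemma card_addline (F : finFieldType) (n : nat) (E : {vspace 'rV[F]_n}) c :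
  c \notin E -> #|(E + <[c]>)%VS| = (#|F| * #|E|)%N.
Proof.
move=> cE.
have c0 : c != 0 by apply: contraNneq cE => ->; apply: mem0v.
rewrite !card_vspace dimv_disjoint_sum ?dim_vline ?c0 ?addn1 ?expnS //.
apply/eqP; rewrite -subv0; apply/subvP => w /memv_capP[wE /vlineP[a wa]].
rewrite memv0; apply/eqP; move: wE; rewrite wa.
have [->|a0] := eqVneq a 0; first by rewrite scale0r.
move=> acE; case/negP: cE.
by rewrite -[c](scalerK a0); apply: memvZ.
Qed.

Lemma splitC (F : finFieldType) (n : nat) (C E : {vspace 'rV[F]_n}) (f : 'rV[F]_n -> nat) :
  (E <= C)%VS ->
  (\sum_(c in C) f c = \sum_(c in E) f c + \sum_(c in C | c \notin E) f c)%N.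
Proof.
move=> EC; rewrite (bigID (fun c => c \in E)) /=; congr (_ + _)%N.
apply: eq_bigl => c; case cE: (c \in E); rewrite ?andbT ?andbF //.
by rewrite (subvP EC).
Qed.
Lemma super (F : finFieldType) (n : nat) (C E : {vspace 'rV[F]_n}) :
  (E <= C)%VS ->
  (\sum_(v in C | v \notin E) SS (E + <[v]>)%VS
   = (#|C| - #|E|) * SS E + (#|F| * #|E| - #|E|) * (SS C - SS E))%N.
Proof.
move=> EC.
have cardCE : (\sum_(v in C | v \notin E) 1 = #|C| - #|E|)%N.
  have := splitC (fun _ => 1%N) EC; rewrite !sum1_card.
  by move=> ->; rewrite addKn.
have SCE : (\sum_(c in C | c \notin E) wt c = SS C - SS E)%N.
  by have := splitC (@wt F n) EC; rewrite /SS => ->; rewrite addKn.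
transitivity (\sum_(v in C | v \notin E)
   \sum_(c in C) (if c \in (E + <[v]>)%VS then wt c else 0))%N.
  apply: eq_bigr => v /andP[vC _]; rewrite /SS big_mkcond [RHS]big_mkcond.
  apply: eq_bigr => c _.
  case cEv: (c \in (E + <[v]>)%VS); last by case: (c \in C).
  have EvC: (E + <[v]> <= C)%VS by rewrite subv_add EC -memvE.
  by rewrite (subvP EvC _ cEv).
rewrite exchange_big /= (splitC _ EC) /=; congr addn.
  rewrite /SS big_distrr /=; apply: eq_bigr => c cE.
  rewrite -cardCE big_distrl /=; apply: eq_bigr => v _.
  by rewrite (subvP (addvSl E _) c cE) mul1n.
rewrite -SCE big_distrr /=; apply: eq_bigr => c /andP[cC cE].
rewrite -(card_addline cE) mulnC -big_mkcondr /=.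
rewrite (eq_bigr (fun _ => wt c * 1)%N); last by move=> *; rewrite muln1.
rewrite -big_distrr /=; congr muln.
have EcC: (E + <[c]> <= C)%VS by rewrite subv_add EC -memvE.
rewrite -!sum1_card.
have := splitC (fun _ => 1%N) (addvSl E <[c]>) => ->.
rewrite addKn.
apply: eq_bigl => v; apply/idP/idP.
  case/andP=> /andP[vC vE] cEv; rewrite vE andbT.
  exact: swapv cE cEv.
case/andP=> vEc vE; rewrite vE andbT (subvP EcC _ vEc) /=.
exact: swapv vE vEc.
Qed.
Lemma arith_step (q X Y a b T : nat): (q*X < Y)%N -> (1 <= X)%N -> (1 <= q)%N -> (a <= b)%N ->
  T = ((Y - X)*a + (q*X - X)*(b - a))%N ->
  ((Y - X)*((q*X) - 1)*b <= (Y-1)*T)%N -> ((X-1)*b <= a*(Y-1))%N.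
Proof.
move=> h1 h2 h3 h4 hT h.
have hXY : (X <= Y)%N.
  apply: leq_trans (ltnW h1); rewrite -{1}[X]mul1n leq_mul2r h3 orbT //.
have hqX : (X <= q * X)%N by rewrite -{1}[X]mul1n leq_mul2r h3 orbT.
have hY : (1 <= Y)%N by apply: leq_trans hXY.
have hqX1 : (1 <= q * X)%N by apply: leq_trans hqX.
rewrite -lez_nat !PoszM -!subzn //.
move: h; rewrite hT -lez_nat !PoszM !PoszD !PoszM -!subzn // => h.
have id : ((Y%:Z-1)*((Y%:Z-X%:Z)*a%:Z + (q%:Z*X%:Z - X%:Z)*(b%:Z-a%:Z))
       - (Y%:Z-X%:Z)*(q%:Z*X%:Z-1)*b%:Z
       = (Y%:Z - q%:Z*X%:Z)*(a%:Z*(Y%:Z-1) - (X%:Z-1)*b%:Z)) by ring.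
have : 0 <= (Y%:Z - q%:Z*X%:Z)*(a%:Z*(Y%:Z-1) - (X%:Z-1)*b%:Z).
  by rewrite -id subr_ge0.
rewrite pmulr_rge0 ?subr_ge0 // subr_gt0 -PoszM ltz_nat //.
Qed.

Lemma dim_addline (F : finFieldType) (n : nat) (E : {vspace 'rV[F]_n}) c :
  c \notin E -> \dim (E + <[c]>)%VS = (\dim E).+1.
Proof.
move=> cE.
have c0 : c != 0 by apply: contraNneq cE => ->; apply: mem0v.
rewrite dimv_disjoint_sum ?dim_vline ?c0 ?addn1 //.
apply/eqP; rewrite -subv0; apply/subvP => w /memv_capP[wE /vlineP[a wa]].
rewrite memv0; apply/eqP; move: wE; rewrite wa.
have [->|a0] := eqVneq a 0; first by rewrite scale0r.
move=> acE; case/negP: cE.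
by rewrite -[c](scalerK a0); apply: memvZ.
Qed.

Lemma sum_lb_eq (T : finType) (P : pred T) (f : T -> nat) (g : nat) :
  (forall v, P v -> g <= f v)%N ->
  (\sum_(v | P v) f v = \sum_(v | P v) g)%N ->
  forall v, P v -> f v = g.
Proof.
move=> lb eqs v Pv; apply/eqP; rewrite eqn_leq lb // andbT.
rewrite leqNgt; apply/negP => lt.
move: eqs; rewrite (bigD1 v) //= [in RHS](bigD1 v) //= => e.
have : (g + \sum_(i | P i && (i != v)) g < f v + \sum_(i | P i && (i != v)) f i)%N.
  rewrite -addSn leq_add //; apply: leq_sum => i /andP[Pi _]; exact: lb.
by rewrite e ltnn.
Qed.

Lemma SS0 (F : finFieldType) (n : nat) : SS (0%VS : {vspace 'rV[F]_n}) = 0%N.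
Proof.
rewrite /SS (big_pred1 0) => [|c]; last by rewrite memv0.
by rewrite wtE; apply/eqP; rewrite cards_eq0; apply/eqP/setP => x; rewrite !inE mxE eqxx.
Qed.

Lemma SS_sub (F : finFieldType) (n : nat) (C E : {vspace 'rV[F]_n}) :
  (E <= C)%VS -> (SS E <= SS C)%N.
Proof. by move=> EC; rewrite /SS (splitC _ EC) leq_addr. Qed.

Theorem proposition1 (F : finFieldType) (n : nat) (C : {vspace 'rV[F]_n})
  (i di dk : nat) :
  let q := #|F| in
  let k := \dim C in
  (1 <= i < k)%N ->
  is_ghw C i di -> is_ghw C k dk ->
  (* d_k = (q^k-1)/(q^(k-i)(q^i-1)) * d_i, cleared of denominators *)
  (dk * (q ^ (k - i) * (q ^ i - 1)) = (q ^ k - 1) * di)%N ->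
  constant_weight C /\
  (forall c : 'rV[F]_n, c \in C -> c != 0 ->
     (* wt c = d_k * q^(k-1)(q-1)/(q^k-1), cleared of denominators *)
     (wt c * (q ^ k - 1) = dk * (q ^ (k - 1) * (q - 1)))%N).
Proof.
move=> q k /andP[i1 ik] [_ ghi] [[D [DC dD] wDk] _] hyp.
have q1 : (1 < q)%N := card_finNzRing_gt1 F.
have q0 : (0 < q)%N by apply: ltnW.
have eDC : D = C by apply/eqP; rewrite eqEdim DC dD leqnn.
subst D.
have SCf : (q * SS C = (q-1) * q^k * dk)%N by rewrite S_formula card_vspace wDk.
have P : forall j, (j <= i)%N -> forall E : {vspace 'rV[F]_n}, (E <= C)%VS ->
    \dim E = (i - j)%N -> ((q^(i-j) - 1) * SS C <= SS E * (q^k - 1))%N.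
  elim => [|j IH] hj E EC dE.
    rewrite subn0 in dE *.
    have h1 : (q * ((q^i-1) * SS C) = (q-1) * q^i * di * (q^k-1))%N.
      rewrite mulnCA SCf.
      have ek : (q^k = q^(k-i) * q^i)%N by rewrite -expnD subnK // ltnW.
      move: hyp; set K := (q^k - 1)%N; rewrite ek => hyp.
      transitivity ((q-1) * q^i * (dk * (q^(k-i) * (q^i-1))))%N; first ring.
      rewrite hyp; ring.
    have h2 : (q * (SS E * (q^k-1)) = (q-1) * q^i * wD E * (q^k-1))%N.
      by rewrite mulnA S_formula card_vspace dE.
    rewrite -(leq_pmul2l q0) h1 h2; apply: leq_mul => //; apply: leq_mul => //.
    exact: ghi.
  have hm : (i - j = (i - j.+1).+1)%N by lia.
  move: dE; set m := (i - j.+1)%N => dE.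
  have IH' : forall W : {vspace 'rV[F]_n}, (W <= C)%VS -> \dim W = m.+1 ->
      ((q^(m.+1) - 1) * SS C <= SS W * (q^k - 1))%N.
    by move=> W WC dW; rewrite -hm; apply: IH (ltnW hj) _ WC _; rewrite hm.
  have cnt : (\sum_(v in C | v \notin E) 1 = q^k - q^m)%N.
    by have := splitC (fun _ => 1%N) EC; rewrite !sum1_card !card_vspace dE => ->; rewrite addKn.
  apply: (@arith_step q (q^m) (q^k) (SS E) (SS C)
            (\sum_(v in C | v \notin E) SS (E + <[v]>)%VS)).
  - by rewrite -expnS ltn_exp2l //; lia.
  - by rewrite expn_gt0 q0.
  - exact: ltnW.
  - exact: SS_sub.
  - by rewrite super // !card_vspace dE.
  rewrite [X in (_ <= X)%N]big_distrr /= -[X in (X <= _)%N]mulnA -cnt.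
  rewrite [X in (X <= _)%N]big_distrl /=.
  apply: leq_sum => v /andP[vC vE]; rewrite mul1n [X in (_ <= X)%N]mulnC -expnS.
  apply: IH'; last by rewrite dim_addline // dE.
  by rewrite subv_add EC -memvE.
have P1 : forall v, v \in C -> v != 0 -> ((q-1) * SS C <= SS <[v]>%VS * (q^k-1))%N.
  move=> v vC v0.
  have := P i.-1 (leq_pred i) <[v]>%VS; rewrite -memvE dim_vline v0.
  have -> : (i - i.-1 = 1)%N by lia.
  by rewrite expn1; apply.
have cnt1 : (\sum_(v in C | v \notin 0%VS) 1 = q^k - 1)%N.
  have := splitC (fun _ => 1%N) (sub0v C).
  by rewrite !sum1_card !card_vspace dimv0 expn0 => ->; rewrite addKn.
have sumL : (\sum_(v in C | v \notin 0%VS) SS <[v]>%VS = (q-1) * SS C)%N.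
  have := super (sub0v C); rewrite SS0 !card_vspace dimv0 expn0 muln0 add0n muln1 subn0.
  by under eq_bigr do rewrite add0v.
have hv := @sum_lb_eq _ (fun v => (v \in C) && (v \notin 0%VS))
   (fun v => SS <[v]>%VS * (q^k-1))%N ((q-1) * SS C)%N.
have hc : forall c, c \in C -> c != 0 -> (SS <[c]>%VS * (q^k-1) = (q-1) * SS C)%N.
  move=> c cC c0; apply: hv; last by rewrite cC memv0 c0.
    by move=> v /andP[vC]; rewrite memv0 => v0; apply: P1.
  transitivity ((\sum_(v in C | v \notin 0%VS) SS <[v]>%VS) * (q^k-1))%N.
    by rewrite big_distrl.
  rewrite sumL -cnt1 big_distrr /=.
  by apply: eq_bigr => v _; rewrite muln1.
have wtf : forall c, c \in C -> c != 0 ->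
    (wt c * (q ^ k - 1) = dk * (q ^ (k - 1) * (q - 1)))%N.
  move=> c cC c0.
  have hS : (q * SS <[c]>%VS = q * ((q-1) * wt c))%N.
    by rewrite S_formula card_vspace dim_vline c0 expn1 /wt; ring.
  move/eqP: hS; rewrite eqn_pmul2l // => /eqP hS.
  have qq : (0 < q * (q-1))%N by rewrite muln_gt0 q0 subn_gt0.
  apply/eqP; rewrite -(eqn_pmul2l qq); apply/eqP.
  have ek : (q^k = q * q^(k-1))%N by rewrite subn1 -expnS prednK //; apply: leq_ltn_trans ik.
  transitivity (q * (SS <[c]>%VS * (q^k-1)))%N; first by rewrite hS; ring.
  rewrite hc // mulnCA SCf ek; ring.
split => //.
have kpos : (0 < q^k - 1)%N.
  by rewrite subn_gt0 -(expn0 q) ltn_exp2l //; apply: leq_ltn_trans (leq0n i) ik.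
move=> c1 c2 c1C c2C c10 c20; apply/eqP; rewrite -(eqn_pmul2r kpos).
by rewrite !wtf.
Qed.
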